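(* (Limited Loss Theorem.) Consider any instance of the repairman problem with unit-length time windows, and let $R^*$ be an optimal service run with respect to the untrimmed requests. Then there exists a service run $R$ with respect to the trimmed requests such that $\pi(R) \geq \frac{1}{3}\,\pi(R^* )$.
   Context: Repairman problem: we are given a weighted undirected graph (distances are shortest-path distances) and a set of service requests; each request has a location (a node; several requests may share a node) and a time window $[a,a+1)$ of unit length. A repairman moves in the graph at a fixed given speed, and may start at any location at any time and stop anywhere. He performs a service event for a request when he is at its location during its time window; each request served yields profit 1. A service run is a feasible sequence of service events; its profit $\pi(R)$ is the total profit of the requests it serves. Trimming: divide time at the integer multiples of $1/2$; a period is a time interval from one such division up to but not including the next. Assume no window starts at a division (and all window start times are positive). Each unit window then wholly contains exactly one period, and the trimmed request is the request whose time window is replaced by that period. A service run with respect to trimmed requests serves a request only when at its location during its trimmed window. *)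

(* Defs.v *)
From mathcomp Require Import all_boot all_order all_algebra.
From mathcomp Require Import reals.
Set Implicit Arguments. Unset Strict Implicit. Unset Printing Implicit Defensive.
Import Order.TTheory GRing.Theory Num.Theory.
Local Open Scope ring_scope.

Section Repairman.
Variables (R : realType) (V : finType).

(* A weighted undirected graph on the finite node set V:
   E u v = Some w  iff  there is an edge {u,v} of weight w. *)
Definition undirected_weighted (E : V -> V -> option R) : Prop :=
  (forall u v, E u v = E v u) /\ (forall u v w, E u v = Some w -> 0 < w).

Inductive walk (E : V -> V -> option R) : V -> V -> R -> Prop :=
| walk_nil u : walk E u u 0
| walk_cons u x v w L : E u x = Some w -> walk E x v L -> walk E u v (w + L).

Definition can_travel (E : V -> V -> option R) (s : R) (u v : V) (T : R) : Prop :=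
  exists L, walk E u v L /\ L <= s * T.

Fixpoint consec {A : Type} (P : A -> A -> Prop) (l : seq A) : Prop :=
  match l with
  | x :: ((y :: _) as l') => P x y /\ consec P l'
  | _ => True
  end.

Definition service_run (E : V -> V -> option R) (s : R) (n : nat)
    (loc : 'I_n -> V) (win : 'I_n -> R -> Prop) (r : seq ('I_n * R)) : Prop :=
  (forall e, e \in r -> win e.1 e.2) /\
  consec (fun e f => e.2 <= f.2 /\ can_travel E s (loc e.1) (loc f.1) (f.2 - e.2)) r.

Definition profit (n : nat) (r : seq ('I_n * R)) : nat := size (undup (map fst r)).

Definition unit_window (n : nat) (a : 'I_n -> R) (i : 'I_n) (t : R) : Prop :=
  a i <= t < a i + 1.

Definition trimmed_window (n : nat) (a : 'I_n -> R) (i : 'I_n) (t : R) : Prop :=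
  exists k : int, a i <= k%:~R / 2 /\ (k%:~R + 1) / 2 <= a i + 1 /\
                  k%:~R / 2 <= t < (k%:~R + 1) / 2.

End Repairman.

(* Main.v *)
Require Import Defs.
From mathcomp Require Import all_boot all_order all_algebra.
From mathcomp Require Import reals boolp.
From mathcomp Require Import ring lra zify.
Import Order.TTheory GRing.Theory Num.Theory.
Local Open Scope ring_scope.

Lemma walk_cat (R : realType) (V : finType) (E : V -> V -> option R) u v w L1 L2 :
  walk E u v L1 -> walk E v w L2 -> walk E u w (L1 + L2).
Proof.
elim=> [x|x y z wt L He _ IH] H2; first by rewrite add0r.
rewrite -addrA; exact: walk_cons He (IH H2).
Qed.

Lemma consec_head {A : Type} (P : A -> A -> Prop) x y m :
  (forall a b c, P a b -> P b c -> P a c) ->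
  P x y -> consec P (y :: m) -> consec P (x :: m).
Proof.
move=> tr Pxy; case: m => [|z m] //= [Pyz Hm]; split=> //; exact: tr Pxy Pyz.
Qed.

Lemma consec_filter_aux {A : Type} (P : A -> A -> Prop) (f : pred A) l x :
  (forall a b c, P a b -> P b c -> P a c) ->
  consec P (x :: l) -> consec P (x :: filter f l).
Proof.
move=> tr; elim: l x => [|y l IH] x //= [Pxy Hy].
case: (f y) => /=.
  split=> //. exact: IH.
apply: consec_head tr Pxy _; exact: IH.
Qed.

Lemma consec_tail {A : Type} (P : A -> A -> Prop) x l :
  consec P (x :: l) -> consec P l.
Proof. by case: l => [|y l] //= []. Qed.

Lemma consec_filter {A : Type} (P : A -> A -> Prop) (f : pred A) l :
  (forall a b c, P a b -> P b c -> P a c) ->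
  consec P l -> consec P (filter f l).
Proof.
move=> tr; elim: l => [|x l IH] // H /=.
case: (f x); first exact: consec_filter_aux.
apply: IH; exact: (consec_tail _ _ _ H).
Qed.

Lemma consec_map {A B : Type} (P : A -> A -> Prop) (Q : B -> B -> Prop) (g : B -> A) l :
  (forall a b, Q a b -> P (g a) (g b)) -> consec Q l -> consec P (map g l).
Proof.
move=> hQ; elim: l => [|x l IH] //=; case: l IH => [|y l] IH //= [Qxy H].
split; [exact: hQ|exact: IH].
Qed.

Theorem theorem1 (R : realType) (V : finType) (E : V -> V -> option R) (s : R)
  (n : nat) (loc : 'I_n -> V) (a : 'I_n -> R) :
  undirected_weighted E ->
  0 < s ->
  (forall i, 0 < a i) ->
  (forall (i : 'I_n) (k : int), a i <> k%:~R / 2) ->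
  forall Rstar : seq ('I_n * R),
    service_run E s loc (unit_window a) Rstar ->
    (forall R' : seq ('I_n * R),
        service_run E s loc (unit_window a) R' -> (profit R' <= profit Rstar)%N) ->
  exists Rt : seq ('I_n * R),
    service_run E s loc (trimmed_window a) Rt /\
    (profit Rstar)%:R / 3 <= (profit Rt)%:R :> R.
Proof.
move=> _ _ _ _ Rs [Hwin Hcon] _.
pose run (c : R) := filter (fun e : 'I_n * R => `[< trimmed_window a e.1 e.2 >])
                      (map (fun e : 'I_n * R => (e.1, e.2 + c)) Rs).
pose P := fun e f : 'I_n * R =>
  e.2 <= f.2 /\ can_travel E s (loc e.1) (loc f.1) (f.2 - e.2).
have runOK c : service_run E s loc (trimmed_window a) (run c).
  split.
    by move=> e; rewrite mem_filter => /andP[/asboolP].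
  apply: consec_filter.
    move=> x y z [xy [L1 [W1 H1]]] [yz [L2 [W2 H2]]]; split; first exact: le_trans xy yz.
    exists (L1 + L2); split; first exact: walk_cat W1 W2.
    have -> : z.2 - x.2 = (y.2 - x.2) + (z.2 - y.2) by ring.
    by rewrite mulrDr lerD.
  apply: (@consec_map _ _ _ P) => [x y [xy ct]|//] /=.
  split; first by rewrite lerD2r.
  have -> : y.2 + c - (x.2 + c) = y.2 - x.2 by ring.
  exact: ct.
have cover : {subset undup (map fst Rs) <=
   undup (map fst (run 0)) ++ undup (map fst (run (1/2))) ++ undup (map fst (run (-(1/2))))}.
  move=> i; rewrite mem_undup => /mapP[[j t] jin /= ->].
  have /andP[/= ha hb] := Hwin _ jin.
  set k := (Num.floor (2 * a j) + 1)%R.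
  have k1 : 2 * a j < k%:~R by exact: floorD1_gt.
  have k2 : k%:~R <= 2 * a j + 1 by rewrite /k intrD lerD2r floor_le.
  have inrun c : trimmed_window a j (t + c) -> j \in map fst (run c).
    move=> tw; apply/mapP; exists (j, t + c) => //.
    rewrite mem_filter; apply/andP; split; first exact/asboolP.
    by apply/mapP; exists (j, t).
  have K1 : a j <= k%:~R / 2 by lra.
  have K2 : (k%:~R + 1) / 2 <= a j + 1 by lra.
  rewrite !mem_cat !mem_undup.
  case: (ltP t (k%:~R / 2)) => h1.
    apply/orP; right; apply/orP; left; apply: inrun.
    exists k; split=> //; split=> //; apply/andP; split; lra.
  case: (ltP t ((k%:~R + 1) / 2)) => h2.
    apply/orP; left; apply: inrun.
    exists k; split=> //; split=> //; apply/andP; split; lra.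
  apply/orP; right; apply/orP; right; apply: inrun.
  exists k; split=> //; split=> //; apply/andP; split; lra.
have := uniq_leq_size (undup_uniq _) cover.
rewrite !size_cat -/(profit Rs) -!/(profit _) => hle.
set p0 := profit (run 0) in hle; set p1 := profit (run (1/2)) in hle;
  set p2 := profit (run (-(1/2))) in hle.
have key : exists c, (profit Rs <= 3 * profit (run c))%N.
  case: (leqP p1 p0) => h10; case: (leqP p2 p0) => h20; case: (leqP p2 p1) => h21;
  by [exists 0; lia | exists (1/2); lia | exists (-(1/2)); lia].
case: key => c hc; exists (run c); split=> //.
rewrite ler_pdivrMr // mulrC -natrM ler_nat; lia.
Qed.
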